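(* Let $m,d',h,c$ be positive integers with $h\le d'$, and let $f:\{0,1\}^{L_{d'}}\to\{0,1\}$ be a function whose value is affected by only $m$ of its inputs. Let $f'=f\circ\Phi_{d'}\circ\Phi_{d'-1}\circ\cdots\circ\Phi_{d'-h+1}$ (with the random maps $\Phi_j$ independent). Then with probability at least $1-(m\theta^h)^c$, fewer than $c$ inputs affect the value of $f'$.
   Context: Fix $k\ge2$ and $0\le\theta<1$. $L_r$ is the set of depth-$r$ vertices of the complete $k$-ary tree, and $\mathrm{parent}(v)$ is the parent of $v$. $R_\theta$ is the distribution on $\{0,1,*\}$ giving $0$ and $1$ each probability $(1-\theta)/2$ and $*$ probability $\theta$. For $j\ge1$, $\Phi_j:\{0,1\}^{L_{j-1}}\to\{0,1\}^{L_j}$ is the random map defined by drawing $r\in\{0,1,*\}^{L_j}$ with i.i.d. $R_\theta$ coordinates and setting $(\Phi_j(x))_v=r_v$ if $r_v\in\{0,1\}$ and $(\Phi_j(x))_v=x_{\mathrm{parent}(v)}$ if $r_v=*$. An input affects a function if the function's value depends on it. *)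

(* Defs.v *)
From HB Require Import structures.
From mathcomp Require Import all_boot all_order all_algebra.
Set Implicit Arguments. Unset Strict Implicit. Unset Printing Implicit Defensive.
Import Order.TTheory GRing.Theory Num.Theory.

(* Depth-r vertices of the complete k-ary tree: words of length r over 'I_k.
   The root is the empty word; the children of a word w are the words [:: a & w],
   so the parent of a depth-(r+1) vertex is obtained by dropping its head letter. *)
Definition L (k r : nat) : finType := (r.-tuple 'I_k)%type.

Definition parent (k r : nat) (v : L k r.+1) : L k r := behead_tuple v.

(* Symbols {0,1,*}: Some false = 0, Some true = 1, None = *. *)
Definition sym := option bool.

Section Defs.
Variable R : realFieldType.
Local Open Scope ring_scope.

Definition wR (theta : R) (s : sym) : R :=
  if s is Some _ then (1 - theta) / 2%:R else theta.

(* Phi_j for j = r.+1, with randomness rr in {0,1,*}^{L_j}. *)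
Definition Phi (k r : nat) (rr : {ffun L k r.+1 -> sym}) (x : {ffun L k r -> bool})
  : {ffun L k r.+1 -> bool} :=
  [ffun v => if rr v is Some b then b else x (parent v)].

(* Joint sample space of the h independent maps Phi_{n+h}, ..., Phi_{n+1}:
   first component is the randomness of the top map Phi_{n+h}. *)
Fixpoint Rand (k h n : nat) : finType :=
  match h with
  | 0 => unit
  | h'.+1 => ({ffun L k (h' + n).+1 -> sym} * Rand k h' n)%type
  end.

Fixpoint weight (theta : R) (k h n : nat) : Rand k h n -> R :=
  match h with
  | 0 => fun _ => 1
  | h'.+1 => fun rr => (\prod_v wR theta (rr.1 v)) * weight theta rr.2
  end.

(* f' = f o Phi_{n+h} o ... o Phi_{n+1}. *)
Fixpoint pull (k h n : nat) :
  Rand k h n -> ({ffun L k (h + n) -> bool} -> bool) -> ({ffun L k n -> bool} -> bool) :=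
  match h with
  | 0 => fun _ f => f
  | h'.+1 => fun rr f => pull rr.2 (fun x => f (Phi rr.1 x))
  end.

Definition prob (theta : R) (k h n : nat) (E : Rand k h n -> bool) : R :=
  \sum_(rr : Rand k h n) weight theta rr * (E rr)%:R.

End Defs.

Definition flip (T : finType) (x : {ffun T -> bool}) (v : T) : {ffun T -> bool} :=
  [ffun u => if u == v then ~~ x u else x u].

Definition affecting (T : finType) (g : {ffun T -> bool} -> bool) : {set T} :=
  [set v | [exists x, g x != g (flip x v)]].

(* Main.v *)
Require Import Defs.
From HB Require Import structures.
From mathcomp Require Import all_boot all_order all_algebra.
From mathcomp Require Import ring lra.
Set Implicit Arguments. Unset Strict Implicit. Unset Printing Implicit Defensive.
Import Order.TTheory GRing.Theory Num.Theory.
Local Open Scope ring_scope.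

Lemma sum_sym (R : nzRingType) (F : option bool -> R) :
  \sum_s F s = F None + (F (Some true) + F (Some false)).
Proof.
rewrite (bigD1 None) //= (bigD1 (Some true)) //= (bigD1 (Some false)) //= big1 ?addr0 //.
by case=> [[]|].
Qed.

Lemma diff_aff (T : finType) (g : {ffun T -> bool} -> bool) y y' :
  g y != g y' -> exists2 v, y v != y' v & v \in affecting g.
Proof.
have: (#|[set v | y v != y' v]| <= #|[set v | y v != y' v]|)%N by [].
move: {2}#|_| => N; elim: N y => [|N IH] y.
  rewrite leqn0 => /eqP/cards0_eq E; have -> : y = y'.
    by apply/ffunP => v; move/setP: E => /(_ v); rewrite !inE; case: eqP.
  by rewrite eqxx.
move=> HN Hg.
case: (set_0Vmem [set v | y v != y' v]) => [E|[v Hv]].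
  move: Hg; have -> : y = y'.
    by apply/ffunP => v; move/setP: E => /(_ v); rewrite !inE; case: eqP.
  by rewrite eqxx.
case: (boolP (g y == g (flip y v))) => [/eqP Hz|Hz]; last first.
  by exists v; rewrite ?inE // in Hv *; apply/existsP; exists y.
have E : [set w | flip y v w != y' w] = [set w | y w != y' w] :\ v.
  apply/setP => w; rewrite !inE /flip ffunE.
  case: (eqVneq w v) => [->|] //=.
  by move: Hv; rewrite inE; case: (y v); case: (y' v).
have H1 : (#|[set w | flip y v w != y' w]| <= N)%N.
  by rewrite E; move: HN; rewrite (cardsD1 v) Hv.
have H2 : g (flip y v) != g y' by rewrite -Hz.
have [w Hw Ha] := IH (flip y v) H1 H2.
exists w => //; move: Hw; rewrite /flip ffunE; case: (eqVneq w v) => [->|_] //=.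
by move: Hv; rewrite inE; case: (y v); case: (y' v).
Qed.

Section S.
Variable R : realFieldType.
Variable theta : R.
Hypothesis th0 : 0 <= theta.
Hypothesis th1 : theta <= 1.
Variable k : nat.

Lemma wR_ge0 s : 0 <= wR theta s.
Proof. by case: s => //= _; apply: divr_ge0; rewrite ?subr_ge0 ?ler0n. Qed.

Lemma layer r (U : {set L k r.+1}) :
  \sum_(rr : {ffun L k r.+1 -> sym}) (\prod_v wR theta (rr v)) *
     (U \subset [set v | rr v == None])%:R = theta ^+ #|U|.
Proof.
transitivity (\sum_(rr : {ffun L k r.+1 -> sym})
   \prod_v (wR theta (rr v) * ((v \in U) ==> (rr v == None))%:R)).
  apply: eq_bigr => rr _; rewrite big_split /=; congr (_ * _).
  case: (boolP (U \subset _)) => H.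
    by rewrite big1 // => v _; case: (boolP (v \in U)) => //= /(subsetP H); rewrite inE => ->.
  have [v Hv Hn] := subsetPn H; rewrite (bigD1 v) //= Hv /=.
  by move: Hn; rewrite inE => /negbTE ->; rewrite mul0r.
rewrite -(bigA_distr_bigA (fun v s => wR theta s * ((v \in U) ==> (s == None))%:R)) /=.
rewrite (bigID (mem U)) /=.
rewrite (eq_bigr (fun _ => theta)); last first.
  by move=> v Hv; rewrite sum_sym /= Hv /= !mulr0 !addr0 mulr1.
rewrite prodr_const big1 ?mulr1 //.
  move=> v Hv; rewrite sum_sym /= (negbTE Hv) /= !mulr1.
  by field.
Qed.

Lemma layer1 r : \sum_(rr : {ffun L k r.+1 -> sym}) (\prod_v wR theta (rr v)) = 1.
Proof.
rewrite -[RHS](expr0 theta) -(cards0 (L k r.+1)) -(layer set0).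
by apply: eq_bigr => rr _; rewrite sub0set mulr1.
Qed.


Lemma aff_Phi r (f : {ffun L k r.+1 -> bool} -> bool) (rr : {ffun L k r.+1 -> sym}) :
  (#|affecting (fun x => f (Phi rr x))| <= #|[set v in affecting f | rr v == None]|)%N.
Proof.
apply: leq_trans (leq_imset_card (@parent k r) _).
apply: subset_leq_card; apply/subsetP => u; rewrite inE => /existsP [x Hx].
have [v Hv Ha] := diff_aff Hx.
move: Hv; rewrite /Phi !ffunE; case Hr: (rr v) => [b|]; first by rewrite eqxx.
case: (eqVneq (parent v) u) => [<-|_]; last by rewrite eqxx.
by move=> _; apply/imsetP; exists v => //; apply/setIdP; rewrite Hr.
Qed.

Lemma layer_bin r (S : {set L k r.+1}) c :
  \sum_(rr : {ffun L k r.+1 -> sym}) (\prod_v wR theta (rr v)) *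
     ('C(#|[set v in S | rr v == None]|, c))%:R = ('C(#|S|, c))%:R * theta ^+ c.
Proof.
have E rr : ('C(#|[set v in S | rr v == None]|, c))%:R =
   \sum_(U : {set L k r.+1} | (U \subset S) && (#|U| == c))
       (U \subset [set v | rr v == None])%:R :> R.
  rewrite -cards_draws -sum1dep_card natr_sum big_mkcond /= [RHS]big_mkcond /=.
  apply: eq_bigr => U _; rewrite setIdE subsetI.
  by case: (U \subset S); case: (#|U| == c); case: (U \subset _).
under eq_bigr do rewrite E mulr_sumr.
rewrite exchange_big /=.
rewrite (eq_bigr (fun _ => theta ^+ c)); last by move=> U /andP[_ /eqP <-]; exact: layer.
rewrite -cards_draws -sum1dep_card natr_sum mulr_suml.
by apply: eq_bigr => U _; rewrite mul1r.
Qed.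

Lemma weight_ge0 h n (rr : Rand k h n) : 0 <= weight theta rr.
Proof.
elim: h n rr => [|h IH] n rr /=; first exact: ler01.
by apply: mulr_ge0; [apply: prodr_ge0 => v _; apply: wR_ge0 | apply: IH].
Qed.

Lemma weight_sum h n : \sum_(rr : Rand k h n) weight theta rr = 1.
Proof.
elim: h n => [|h IH] n /=; first by rewrite /index_enum !unlock /= addr0.
rewrite -(pair_bigA _ (fun (r1 : {ffun L k (h + n).+1 -> sym}) (r' : Rand k h n) => (\prod_v wR theta (r1 v)) * weight theta r')) /=.
under eq_bigr do rewrite -mulr_sumr IH mulr1.
exact: layer1.
Qed.

Lemma main_ind h n (f : {ffun L k (h + n) -> bool} -> bool) c :
  \sum_(rr : Rand k h n) weight theta rr * ('C(#|affecting (pull rr f)|, c))%:R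
    <= theta ^+ (h * c) * ('C(#|affecting f|, c))%:R.
Proof.
elim: h n f => [|h IH] n f /=.
  by rewrite /index_enum !unlock /= addr0 !mul1r.
rewrite -(pair_bigA _ (fun (r1 : {ffun L k (h + n).+1 -> sym}) (r' : Rand k h n) => (\prod_v wR theta (r1 v)) * weight theta r' *
   ('C(#|affecting (pull r' (fun x => f (Phi r1 x)))|, c))%:R)) /=.
apply: (@le_trans _ _ (\sum_(r1 : {ffun L k (h + n).+1 -> sym}) (\prod_v wR theta (r1 v)) *
   (theta ^+ (h * c) * ('C(#|[set v in affecting f | r1 v == None]|, c))%:R))).
  apply: ler_sum => r1 _.
  under eq_bigr do rewrite -mulrA.
  rewrite -mulr_sumr; apply: ler_wpM2l; first by apply: prodr_ge0 => v _; apply: wR_ge0.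
  apply: le_trans (IH n _) _.
  apply: ler_wpM2l; first exact: exprn_ge0.
  by rewrite ler_nat; apply: leq_bin2l; apply: aff_Phi.
under eq_bigr do rewrite mulrCA.
rewrite -mulr_sumr layer_bin mulSn exprD.
by rewrite [X in X <= _](_ : _ = theta ^+ c * theta ^+ (h * c) * 'C(#|affecting f|, c)%:R) //; ring.
Qed.

End S.

Lemma exp_mono m c : (m ^ c <= m.+1 ^ c)%N.
Proof. by elim: c => // c IH; rewrite !expnS leq_mul. Qed.

Lemma bin_le_exp m c : ('C(m, c) <= m ^ c)%N.
Proof.
elim: m c => [|m IH] [|c] //; rewrite binS.
apply: leq_trans (leq_add (IH c.+1) (IH c)) _.
rewrite [X in (_ <= X)%N]expnS mulSn addnC leq_add ?exp_mono //.
by rewrite expnS leq_mul ?exp_mono.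
Qed.

Theorem mainTheorem14 (R : realFieldType) (k : nat) (theta : R) (m n h c : nat)
  (f : {ffun L k (h + n) -> bool} -> bool) :
  (2 <= k)%N -> 0 <= theta -> theta < 1 ->
  (0 < m)%N -> (0 < h)%N -> (0 < c)%N ->
  (#|affecting f| <= m)%N ->
  1 - (m%:R * theta ^+ h) ^+ c <=
    prob theta (fun rr : Rand k h n => (#|affecting (pull rr f)| < c)%N).
Proof.
move=> _ th0 th1lt _ _ _ Hm.
have th1 := ltW th1lt.
rewrite /prob.
apply: (@le_trans _ _ (\sum_(rr : Rand k h n) weight theta rr *
          (1 - ('C(#|affecting (pull rr f)|, c))%:R))); last first.
  apply: ler_sum => rr _; apply: ler_wpM2l; first exact: weight_ge0.
  case: ltnP => H /=.
    by rewrite gerBl ler0n.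
  by rewrite subr_le0 ler1n bin_gt0.
under eq_bigr do rewrite mulrBr mulr1.
rewrite sumrB (weight_sum theta k h n) lerD2l lerN2.
apply: le_trans (main_ind th0 th1 f c) _.
rewrite exprMn -exprM [X in _ <= X]mulrC; apply: ler_wpM2l; first exact: exprn_ge0.
by rewrite -natrX ler_nat; apply: leq_trans (leq_bin2l _ Hm) (bin_le_exp _ _).
Qed.
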